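(* For every integer $n\geq 1$, the following equalities of combinatorial games hold: $$\uparrow^{[n]}*\ =\ \left\{0, \uparrow^{[n-1]}*\ \big|\ 0, \uparrow^{[n+1]}*\right\}\ =\ \left\{0, \uparrow^{[n-1]}*\ \big|\ 0\right\},$$ $$\downarrow_{[n]}*\ =\ \left\{0,\downarrow_{[n+1]}*\ \big|\ 0, \downarrow_{[n-1]}*\right\}\ =\ \left\{0\ \big|\ 0, \downarrow_{[n-1]}*\right\}.$$ Furthermore, $$\uparrow^{[n]}*\ =\ \left\{0,\{0,\uparrow^{[n]}*\ |\ 0,\uparrow^{[n]}*\}\ \Big|\ 0,\{0,\uparrow^{[n]}*\ |\ 0,\uparrow^{[n]}*\}\right\},$$ $$\downarrow_{[n]}*\ =\ \left\{0,\{0,\downarrow_{[n]}*\ |\ 0,\downarrow_{[n]}*\}\ \Big|\ 0,\{0,\downarrow_{[n]}*\ |\ 0,\downarrow_{[n]}*\}\right\}.$$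
   Context: Games are short partizan combinatorial games under normal play (the player unable to move loses), in Conway's theory: $\{X\mid Y\}$ denotes the game whose Left options are the games in $X$ and Right options the games in $Y$; $G+H$ is the disjunctive sum; $-G$ swaps the roles of Left and Right; $G=H$ means that $G+(-H)$ is a win for the second player. Notation: $0=\{\,\mid\,\}$, $*=\{0\mid 0\}$, $\uparrow=\{0\mid *\}$, $\downarrow=\{*\mid 0\}$; $\uparrow^{[1]}=\uparrow$ and $\uparrow^{[n]}=\{\uparrow^{[n-1]}\mid *\}$ for $n\geq 2$; $\downarrow_{[1]}=\downarrow$ and $\downarrow_{[n]}=\{*\mid \downarrow_{[n-1]}\}$ for $n\geq 2$; with the convention $\uparrow^{[0]}=\downarrow_{[0]}=0$. For a game $J$, $J*$ denotes $J+*$. *)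

(* Defs.v *)
(* short partizan games in Conway's theory, represented
   as finite trees whose nodes carry a finite list of Left options and a
   finite list of Right options. *)
From Stdlib Require Import List Bool Arith.
Import ListNotations.

Inductive game : Type :=
  | Game : list game -> list game -> game.

Notation "{{ X | Y }}" := (Game X Y) (at level 0).

Fixpoint gneg (g : game) : game :=
  match g with
  | Game l r => Game (map gneg r) (map gneg l)
  end.

Fixpoint gadd (g : game) : game -> game :=
  fix gadd_g (h : game) : game :=
    match g, h with
    | Game gl gr, Game hl hr =>
        Game (map (fun x => gadd x h) gl ++ map gadd_g hl)
             (map (fun x => gadd x h) gr ++ map gadd_g hr)
    end.

(* outcome under normal play: (Left wins moving first, Right wins moving first) *)
Fixpoint outcome (g : game) : bool * bool :=
  match g with
  | Game l r =>
      (existsb (fun x => negb (snd (outcome x))) l,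
       existsb (fun x => negb (fst (outcome x))) r)
  end.

Definition second_player_win (g : game) : Prop :=
  fst (outcome g) = false /\ snd (outcome g) = false.

Definition game_eq (g h : game) : Prop := second_player_win (gadd g (gneg h)).

Definition gzero : game := Game [] [].
Definition gstar : game := Game [gzero] [gzero].

Fixpoint upn (n : nat) : game :=
  match n with
  | 0 => gzero
  | S m => Game [upn m] [gstar]
  end.

Fixpoint downn (n : nat) : game :=
  match n with
  | 0 => gzero
  | S m => Game [gstar] [downn m]
  end.

Definition starred (g : game) : game := gadd g gstar.

(* Main.v *)
Require Import Defs.
From Stdlib Require Import List Arith.
Import ListNotations.
From Stdlib Require Import Lia Setoid Morphisms Bool.
Definition lefts g := match g with Game l _ => l end.
Definition rights g := match g with Game _ r => r end.
Definition Lw g := fst (outcome g).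
Definition Rw g := snd (outcome g).

Fixpoint gsize (g : game) : nat :=
  match g with Game l r => S (list_sum (map gsize l) + list_sum (map gsize r)) end.

Lemma in_sum_le l x : In x l -> gsize x <= list_sum (map gsize l).
Proof. induction l as [|a l IH]; simpl; [tauto|]. intros [<-|H]; [lia|]. specialize (IH H); lia. Qed.

Lemma size_lefts g x : In x (lefts g) -> gsize x < gsize g.
Proof. destruct g as [l r]; simpl. intros H; apply in_sum_le in H; lia. Qed.
Lemma size_rights g x : In x (rights g) -> gsize x < gsize g.
Proof. destruct g as [l r]; simpl. intros H; apply in_sum_le in H; lia. Qed.

Lemma size_ind (P : game -> Prop) :
  (forall g, (forall h, gsize h < gsize g -> P h) -> P g) -> forall g, P g.
Proof.
  intros H g. remember (gsize g) as n. revert g Heqn.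
  induction n as [n IH] using lt_wf_ind. intros g ->. apply H. intros h Hh. eapply IH; eauto.
Qed.

Lemma size_ind2 (P : game -> game -> Prop) :
  (forall g h, (forall g' h', gsize g' + gsize h' < gsize g + gsize h -> P g' h') -> P g h) ->
  forall g h, P g h.
Proof.
  intros H g h. remember (gsize g + gsize h) as n. revert g h Heqn.
  induction n as [n IH] using lt_wf_ind. intros g h ->. apply H. intros g' h' Hh. eapply IH; eauto.
Qed.

Lemma size_ind3 (P : game -> game -> game -> Prop) :
  (forall g h k, (forall g' h' k', gsize g' + gsize h' + gsize k' < gsize g + gsize h + gsize k -> P g' h' k') -> P g h k) ->
  forall g h k, P g h k.
Proof.
  intros H g h k. remember (gsize g + gsize h + gsize k) as n. revert g h k Heqn.
  induction n as [n IH] using lt_wf_ind. intros g h k ->. apply H. intros g' h' k' Hh. eapply IH; eauto.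
Qed.

Lemma lefts_add g h : lefts (gadd g h) = map (fun x => gadd x h) (lefts g) ++ map (gadd g) (lefts h).
Proof. destruct g, h; reflexivity. Qed.
Lemma rights_add g h : rights (gadd g h) = map (fun x => gadd x h) (rights g) ++ map (gadd g) (rights h).
Proof. destruct g, h; reflexivity. Qed.
Lemma lefts_neg g : lefts (gneg g) = map gneg (rights g).
Proof. destruct g; reflexivity. Qed.
Lemma rights_neg g : rights (gneg g) = map gneg (lefts g).
Proof. destruct g; reflexivity. Qed.
Lemma game_eta g : g = Game (lefts g) (rights g).
Proof. destruct g; reflexivity. Qed.

Lemma Lw_eq g : Lw g = existsb (fun x => negb (Rw x)) (lefts g).
Proof. destruct g; reflexivity. Qed.
Lemma Rw_eq g : Rw g = existsb (fun x => negb (Lw x)) (rights g).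
Proof. destruct g; reflexivity. Qed.

Lemma Lw_true g : Lw g = true <-> exists x, In x (lefts g) /\ Rw x = false.
Proof. rewrite Lw_eq, existsb_exists. split; intros [x [H1 H2]]; exists x; split; auto;
  destruct (Rw x); simpl in *; congruence. Qed.
Lemma Rw_true g : Rw g = true <-> exists x, In x (rights g) /\ Lw x = false.
Proof. rewrite Rw_eq, existsb_exists. split; intros [x [H1 H2]]; exists x; split; auto;
  destruct (Lw x); simpl in *; congruence. Qed.
Lemma Lw_false g : Lw g = false <-> forall x, In x (lefts g) -> Rw x = true.
Proof. split.
  - intros H x Hx. destruct (Rw x) eqn:E; auto. assert (Lw g = true) by (apply Lw_true; eauto). congruence.
  - intros H. destruct (Lw g) eqn:E; auto. apply Lw_true in E as [x [H1 H2]]. rewrite H in H2; auto.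
Qed.
Lemma Rw_false g : Rw g = false <-> forall x, In x (rights g) -> Lw x = true.
Proof. split.
  - intros H x Hx. destruct (Lw x) eqn:E; auto. assert (Rw g = true) by (apply Rw_true; eauto). congruence.
  - intros H. destruct (Rw g) eqn:E; auto. apply Rw_true in E as [x [H1 H2]]. rewrite H in H2; auto.
Qed.

Lemma gneg_invol g : gneg (gneg g) = g.
Proof.
  induction g as [g IH] using size_ind. destruct g as [l r]. simpl.
  rewrite !map_map. f_equal; rewrite <- map_id; apply map_ext_in; intros x Hx; apply IH;
  simpl; apply in_sum_le in Hx; lia.
Qed.

Lemma gneg_add g h : gneg (gadd g h) = gadd (gneg g) (gneg h).
Proof.
  revert g h. apply size_ind2. intros g h IH.
  rewrite (game_eta (gneg (gadd g h))), (game_eta (gadd (gneg g) (gneg h))).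
  rewrite lefts_neg, rights_neg, lefts_add, rights_add, lefts_add, rights_add,
    !lefts_neg, !rights_neg, !map_app, !map_map.
  f_equal; f_equal; apply map_ext_in; intros x Hx; apply IH.
  all: first [apply size_rights in Hx | apply size_lefts in Hx]; lia.
Qed.


Lemma existsb_map_ext {A B} (f : B -> bool) (g : A -> B) (k : A -> bool) l :
  (forall x, In x l -> f (g x) = k x) -> existsb f (map g l) = existsb k l.
Proof. induction l as [|a l IH]; simpl; auto. intros H. rewrite H, IH; auto. Qed.

Lemma outcome_neg g : Lw (gneg g) = Rw g /\ Rw (gneg g) = Lw g.
Proof.
  induction g as [g IH] using size_ind.
  rewrite (Lw_eq (gneg g)), (Rw_eq (gneg g)), (Rw_eq g), (Lw_eq g), lefts_neg, rights_neg.
  split; apply existsb_map_ext; intros x Hx; f_equal; apply IH.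
  - apply size_rights; auto.
  - apply size_lefts; auto.
Qed.
Lemma Lw_neg g : Lw (gneg g) = Rw g. Proof. apply outcome_neg. Qed.
Lemma Rw_neg g : Rw (gneg g) = Lw g. Proof. apply outcome_neg. Qed.

Definition Pp g := Lw g = false /\ Rw g = false.

Lemma key : forall A B,
  (Rw A = false -> Rw B = false -> Rw (gadd A B) = false) /\
  (Lw A = true -> Rw B = false -> Lw (gadd A B) = true) /\
  (Lw B = true -> Rw A = false -> Lw (gadd A B) = true).
Proof.
  apply size_ind2. intros A B IH. split; [|split].
  - intros HA HB. apply Rw_false. rewrite rights_add. intros x Hx.
    apply in_app_iff in Hx as [Hx|Hx]; apply in_map_iff in Hx as [y [<- Hy]].
    + rewrite Rw_false in HA. destruct (IH y B) as (_&I2&_). { apply size_rights in Hy; lia. } apply I2; auto.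
    + rewrite Rw_false in HB. destruct (IH A y) as (_&_&I3). { apply size_rights in Hy; lia. } apply I3; auto.
  - intros HA HB. apply Lw_true in HA as [y [Hy Hy2]]. apply Lw_true. exists (gadd y B).
    split. { rewrite lefts_add. apply in_app_iff; left. apply in_map_iff; eauto. }
    destruct (IH y B) as (I1&_&_). { apply size_lefts in Hy; lia. } auto.
  - intros HB HA. apply Lw_true in HB as [y [Hy Hy2]]. apply Lw_true. exists (gadd A y).
    split. { rewrite lefts_add. apply in_app_iff; right. apply in_map_iff; eauto. }
    destruct (IH A y) as (I1&_&_). { apply size_lefts in Hy; lia. } auto.
Qed.

Lemma key_dual A B :
  (Lw A = false -> Lw B = false -> Lw (gadd A B) = false) /\
  (Rw A = true -> Lw B = false -> Rw (gadd A B) = true) /\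
  (Rw B = true -> Lw A = false -> Rw (gadd A B) = true).
Proof.
  destruct (key (gneg A) (gneg B)) as [H1 [H2 H3]].
  rewrite <- gneg_add, !Lw_neg, !Rw_neg in *. auto.
Qed.

Lemma P_add_r X Y : Pp Y -> Lw (gadd X Y) = Lw X /\ Rw (gadd X Y) = Rw X.
Proof.
  intros [HL HR]. destruct (key X Y) as [K1 [K2 K3]]. destruct (key_dual X Y) as [D1 [D2 D3]].
  split.
  - destruct (Lw X) eqn:E; auto.
  - destruct (Rw X) eqn:E; auto.
Qed.

Lemma mirror g : Pp (gadd g (gneg g)).
Proof.
  induction g as [g IH] using size_ind. split.
  - apply Lw_false. rewrite lefts_add, lefts_neg. intros x Hx.
    apply in_app_iff in Hx as [Hx|Hx]; apply in_map_iff in Hx as [y [<- Hy]].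
    + apply Rw_true. exists (gadd y (gneg y)). split.
      * rewrite rights_add, rights_neg. apply in_app_iff; right. apply in_map_iff. exists (gneg y).
        split; auto. apply in_map; auto.
      * apply IH. apply size_lefts; auto.
    + apply in_map_iff in Hy as [z [<- Hz]]. apply Rw_true. exists (gadd z (gneg z)). split.
      * rewrite rights_add. apply in_app_iff; left. apply in_map_iff; eauto.
      * apply IH. apply size_rights; auto.
  - apply Rw_false. rewrite rights_add, rights_neg. intros x Hx.
    apply in_app_iff in Hx as [Hx|Hx]; apply in_map_iff in Hx as [y [<- Hy]].
    + apply Lw_true. exists (gadd y (gneg y)). split.
      * rewrite lefts_add, lefts_neg. apply in_app_iff; right. apply in_map_iff. exists (gneg y).
        split; auto. apply in_map; auto.
      * apply IH. apply size_rights; auto.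
    + apply in_map_iff in Hy as [z [<- Hz]]. apply Lw_true. exists (gadd z (gneg z)). split.
      * rewrite lefts_add. apply in_app_iff; left. apply in_map_iff; eauto.
      * apply IH. apply size_lefts; auto.
Qed.

Inductive eqv : game -> game -> Prop :=
| eqv_i l r l' r' :
  (forall x, In x l -> exists y, In y l' /\ eqv x y) ->
  (forall y, In y l' -> exists x, In x l /\ eqv x y) ->
  (forall x, In x r -> exists y, In y r' /\ eqv x y) ->
  (forall y, In y r' -> exists x, In x r /\ eqv x y) ->
  eqv (Game l r) (Game l' r').

Lemma eqv_inv g h : eqv g h ->
  (forall x, In x (lefts g) -> exists y, In y (lefts h) /\ eqv x y) /\
  (forall y, In y (lefts h) -> exists x, In x (lefts g) /\ eqv x y) /\
  (forall x, In x (rights g) -> exists y, In y (rights h) /\ eqv x y) /\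
  (forall y, In y (rights h) -> exists x, In x (rights g) /\ eqv x y).
Proof. intros H; destruct H; simpl; auto. Qed.

Lemma eqv_mk g h :
  (forall x, In x (lefts g) -> exists y, In y (lefts h) /\ eqv x y) ->
  (forall y, In y (lefts h) -> exists x, In x (lefts g) /\ eqv x y) ->
  (forall x, In x (rights g) -> exists y, In y (rights h) /\ eqv x y) ->
  (forall y, In y (rights h) -> exists x, In x (rights g) /\ eqv x y) -> eqv g h.
Proof. destruct g, h; simpl; constructor; auto. Qed.

Lemma eqv_refl g : eqv g g.
Proof. induction g as [g IH] using size_ind. apply eqv_mk; intros x Hx; exists x; split; auto.
  all: apply IH; first [apply size_lefts; exact Hx | apply size_rights; exact Hx]. Qed.

Lemma eqv_sym : forall g h, eqv g h -> eqv h g.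
Proof.
  induction g as [g IH] using size_ind. intros h H. apply eqv_inv in H as (H1&H2&H3&H4).
  apply eqv_mk.
  - intros y Hy. destruct (H2 y Hy) as [x [Hx E]]. exists x; split; auto. apply IH; auto. apply size_lefts; auto.
  - intros x Hx. destruct (H1 x Hx) as [y [Hy E]]. exists y; split; auto. apply IH; auto. apply size_lefts; auto.
  - intros y Hy. destruct (H4 y Hy) as [x [Hx E]]. exists x; split; auto. apply IH; auto. apply size_rights; auto.
  - intros x Hx. destruct (H3 x Hx) as [y [Hy E]]. exists y; split; auto. apply IH; auto. apply size_rights; auto.
Qed.

Lemma eqv_trans : forall g h k, eqv g h -> eqv h k -> eqv g k.
Proof.
  induction g as [g IH] using size_ind. intros h k H K.
  apply eqv_inv in H as (H1&H2&H3&H4). apply eqv_inv in K as (K1&K2&K3&K4).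
  apply eqv_mk.
  - intros x Hx. destruct (H1 x Hx) as [y [Hy E]]. destruct (K1 y Hy) as [z [Hz E']].
    exists z; split; auto. eapply IH; eauto. apply size_lefts; auto.
  - intros z Hz. destruct (K2 z Hz) as [y [Hy E']]. destruct (H2 y Hy) as [x [Hx E]].
    exists x; split; auto. eapply IH; eauto. apply size_lefts; auto.
  - intros x Hx. destruct (H3 x Hx) as [y [Hy E]]. destruct (K3 y Hy) as [z [Hz E']].
    exists z; split; auto. eapply IH; eauto. apply size_rights; auto.
  - intros z Hz. destruct (K4 z Hz) as [y [Hy E']]. destruct (H4 y Hy) as [x [Hx E]].
    exists x; split; auto. eapply IH; eauto. apply size_rights; auto.
Qed.

Lemma eqv_outcome : forall g h, eqv g h -> Lw g = Lw h /\ Rw g = Rw h.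
Proof.
  induction g as [g IH] using size_ind. intros h H. apply eqv_inv in H as (H1&H2&H3&H4).
  split.
  - destruct (Lw g) eqn:E; symmetry.
    + apply Lw_true in E as [x [Hx Ex]]. destruct (H1 x Hx) as [y [Hy Exy]].
      apply Lw_true. exists y; split; auto. rewrite <- Ex. symmetry. apply (IH x); auto. apply size_lefts; auto.
    + destruct (Lw h) eqn:F; auto. apply Lw_true in F as [y [Hy Ey]]. destruct (H2 y Hy) as [x [Hx Exy]].
      assert (Lw g = true); [|congruence]. apply Lw_true. exists x; split; auto. rewrite <- Ey. apply (IH x); auto. apply size_lefts; auto.
  - destruct (Rw g) eqn:E; symmetry.
    + apply Rw_true in E as [x [Hx Ex]]. destruct (H3 x Hx) as [y [Hy Exy]].
      apply Rw_true. exists y; split; auto. rewrite <- Ex. symmetry. apply (IH x); auto. apply size_rights; auto.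
    + destruct (Rw h) eqn:F; auto. apply Rw_true in F as [y [Hy Ey]]. destruct (H4 y Hy) as [x [Hx Exy]].
      assert (Rw g = true); [|congruence]. apply Rw_true. exists x; split; auto. rewrite <- Ey. apply (IH x); auto. apply size_rights; auto.
Qed.

Definition R2 (l l' : list game) :=
  (forall x, In x l -> exists y, In y l' /\ eqv x y) /\ (forall y, In y l' -> exists x, In x l /\ eqv x y).

Lemma eqv_mk2 g h : R2 (lefts g) (lefts h) -> R2 (rights g) (rights h) -> eqv g h.
Proof. intros [] []; apply eqv_mk; auto. Qed.
Lemma eqv_inv2 g h : eqv g h -> R2 (lefts g) (lefts h) /\ R2 (rights g) (rights h).
Proof. intros H; apply eqv_inv in H as (?&?&?&?); split; split; auto. Qed.

Lemma R2_app A A' B B' : R2 A A' -> R2 B B' -> R2 (A ++ B) (A' ++ B').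
Proof.
  intros [H1 H2] [K1 K2]; split.
  - intros x Hx; apply in_app_iff in Hx as [Hx|Hx];
    [destruct (H1 x Hx) as [y [? ?]] | destruct (K1 x Hx) as [y [? ?]]]; exists y; rewrite in_app_iff; auto.
  - intros x Hx; apply in_app_iff in Hx as [Hx|Hx];
    [destruct (H2 x Hx) as [y [? ?]] | destruct (K2 x Hx) as [y [? ?]]]; exists y; rewrite in_app_iff; auto.
Qed.
Lemma R2_comm_r X A B : R2 X (A ++ B) -> R2 X (B ++ A).
Proof.
  intros [H1 H2]; split.
  - intros x Hx. destruct (H1 x Hx) as [y [Hy E]]. exists y. rewrite in_app_iff in *. tauto.
  - intros y Hy. apply H2. rewrite in_app_iff in *. tauto.
Qed.
Lemma R2_map l l' f f' : R2 l l' -> (forall a a', In a l -> eqv a a' -> eqv (f a) (f' a')) ->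
  R2 (map f l) (map f' l').
Proof.
  intros [H1 H2] HF; split.
  - intros x Hx. apply in_map_iff in Hx as [a [<- Ha]]. destruct (H1 a Ha) as [a' [Ha' E]].
    exists (f' a'); split; [apply in_map; auto | auto].
  - intros y Hy. apply in_map_iff in Hy as [a' [<- Ha']]. destruct (H2 a' Ha') as [a [Ha E]].
    exists (f a); split; [apply in_map; auto | auto].
Qed.
Lemma R2_refl l : R2 l l.
Proof. split; intros x Hx; exists x; split; auto; apply eqv_refl. Qed.

Ltac szl := match goal with
  | Ha : In ?a (lefts ?g) |- _ => apply size_lefts in Ha
  | Ha : In ?a (rights ?g) |- _ => apply size_rights in Ha
  end.

Lemma eqv_add : forall g h g' h', eqv g g' -> eqv h h' -> eqv (gadd g h) (gadd g' h').
Proof.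
  apply (size_ind2 (fun g h => forall g' h', eqv g g' -> eqv h h' -> eqv (gadd g h) (gadd g' h'))).
  intros g h IH g' h' Hg Hh.
  pose proof (eqv_inv2 _ _ Hg) as [Hg1 Hg2]. pose proof (eqv_inv2 _ _ Hh) as [Hh1 Hh2].
  apply eqv_mk2; rewrite ?lefts_add, ?rights_add; apply R2_app; apply R2_map; auto;
    intros a a' Ha E; apply IH; auto; szl; lia.
Qed.

Lemma eqv_neg : forall g h, eqv g h -> eqv (gneg g) (gneg h).
Proof.
  induction g as [g IH] using size_ind. intros h H. apply eqv_inv2 in H as [H1 H2].
  apply eqv_mk2; rewrite ?lefts_neg, ?rights_neg; apply R2_map; auto; intros a a' Ha E; apply IH; auto;
  szl; lia.
Qed.

Lemma eqv_comm : forall g h, eqv (gadd g h) (gadd h g).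
Proof.
  apply size_ind2. intros g h IH.
  apply eqv_mk2; rewrite ?lefts_add, ?rights_add; apply R2_comm_r; apply R2_app; apply R2_map;
    try apply R2_refl; intros a a' Ha E.
  all: eapply eqv_trans; [apply IH; szl; lia|].
  all: apply eqv_add; auto; apply eqv_refl.
Qed.

Lemma R2_map_same l (f f' : game -> game) : (forall a, In a l -> eqv (f a) (f' a)) -> R2 (map f l) (map f' l).
Proof. intros H. split.
  - intros x Hx. apply in_map_iff in Hx as [a [<- Ha]]. exists (f' a); split; [apply in_map|]; auto.
  - intros x Hx. apply in_map_iff in Hx as [a [<- Ha]]. exists (f a); split; [apply in_map|]; auto.
Qed.

Lemma eqv_assoc : forall g h k, eqv (gadd (gadd g h) k) (gadd g (gadd h k)).
Proof.
  apply size_ind3. intros g h k IH.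
  apply eqv_mk2; rewrite ?lefts_add, ?rights_add, ?map_app, ?map_map, <- ?app_assoc;
    repeat apply R2_app; apply R2_map_same; intros a Ha; apply IH; szl; lia.
Qed.

Lemma eqv_Pp g h : eqv g h -> Pp g -> Pp h.
Proof. intros E [H1 H2]. destruct (eqv_outcome _ _ E). split; congruence. Qed.

Lemma P_add_l X Y : Pp Y -> Lw (gadd Y X) = Lw X /\ Rw (gadd Y X) = Rw X.
Proof. intros H. destruct (eqv_outcome _ _ (eqv_comm Y X)). destruct (P_add_r X Y H). split; congruence. Qed.

Lemma Pp_neg g : Pp (gneg g) <-> Pp g.
Proof. unfold Pp. rewrite Lw_neg, Rw_neg. tauto. Qed.

Lemma Pp_add g h : Pp g -> Pp h -> Pp (gadd g h).
Proof. intros Hg Hh. destruct (P_add_r g h Hh). destruct Hg. split; congruence. Qed.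

Definition sim g h := Pp (gadd g (gneg h)).

Lemma eqv_sim g h : eqv g h -> sim g h.
Proof. intros E. unfold sim. eapply eqv_Pp; [|apply (mirror g)].
  apply eqv_add; [apply eqv_refl|apply eqv_neg; auto]. Qed.

Lemma sim_refl g : sim g g. Proof. apply mirror. Qed.

Lemma sim_sym g h : sim g h -> sim h g.
Proof. unfold sim. intros H. apply Pp_neg in H. rewrite gneg_add, gneg_invol in H.
  eapply eqv_Pp; [apply eqv_comm|exact H]. Qed.

Lemma sim_outcome g h : sim g h -> Lw g = Lw h /\ Rw g = Rw h.
Proof.
  intros H.
  assert (E : eqv (gadd h (gadd g (gneg h))) (gadd g (gadd h (gneg h)))).
  { eapply eqv_trans; [apply eqv_sym, eqv_assoc|].
    eapply eqv_trans; [apply eqv_add; [apply eqv_comm|apply eqv_refl]|]. apply eqv_assoc. }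
  destruct (eqv_outcome _ _ E). destruct (P_add_r h _ H). destruct (P_add_r g _ (mirror h)).
  split; congruence.
Qed.

Lemma sim_trans g h k : sim g h -> sim h k -> sim g k.
Proof.
  unfold sim. intros H K.
  assert (E : eqv (gadd (gadd g (gneg h)) (gadd h (gneg k))) (gadd (gadd g (gneg k)) (gadd h (gneg h)))).
  { eapply eqv_trans; [apply eqv_assoc|].
    eapply eqv_trans; [|apply eqv_sym, eqv_assoc].
    apply eqv_add; [apply eqv_refl|].
    eapply eqv_trans; [apply eqv_sym, eqv_assoc|].
    eapply eqv_trans; [apply eqv_comm|].
    apply eqv_add; [apply eqv_refl|apply eqv_comm]. }
  pose proof (Pp_add _ _ H K) as P1. apply (eqv_Pp _ _ E) in P1.
  destruct P1 as [P1 P2]. destruct (P_add_r (gadd g (gneg k)) _ (mirror h)). split; congruence.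
Qed.

Lemma sim_add g g' h h' : sim g g' -> sim h h' -> sim (gadd g h) (gadd g' h').
Proof.
  unfold sim. intros H K. rewrite gneg_add.
  eapply eqv_Pp; [|apply (Pp_add _ _ H K)].
  eapply eqv_trans; [apply eqv_assoc|].
  eapply eqv_trans; [|apply eqv_sym, eqv_assoc].
  apply eqv_add; [apply eqv_refl|].
  eapply eqv_trans; [apply eqv_sym, eqv_assoc|].
  eapply eqv_trans; [|apply eqv_assoc].
  apply eqv_add; [apply eqv_comm|apply eqv_refl].
Qed.

Lemma sim_neg g h : sim g h -> sim (gneg g) (gneg h).
Proof. unfold sim. intros H. rewrite gneg_invol. apply Pp_neg in H. rewrite gneg_add, gneg_invol in H. exact H. Qed.

#[global] Instance sim_equiv : Equivalence sim.
Proof. split; [exact sim_refl|exact sim_sym|exact sim_trans]. Qed.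
#[global] Instance gadd_proper : Proper (sim ==> sim ==> sim) gadd.
Proof. intros ? ? ? ? ? ?; apply sim_add; auto. Qed.
#[global] Instance gneg_proper : Proper (sim ==> sim) gneg.
Proof. intros ? ? ?; apply sim_neg; auto. Qed.
#[global] Instance Lw_proper : Proper (sim ==> eq) Lw.
Proof. intros ? ? H; apply sim_outcome; auto. Qed.
#[global] Instance Rw_proper : Proper (sim ==> eq) Rw.
Proof. intros ? ? H; apply sim_outcome; auto. Qed.

Lemma add_comm g h : sim (gadd g h) (gadd h g). Proof. apply eqv_sim, eqv_comm. Qed.
Lemma add_assoc g h k : sim (gadd (gadd g h) k) (gadd g (gadd h k)). Proof. apply eqv_sim, eqv_assoc. Qed.
Lemma eqv_add_0_r g : eqv (gadd g gzero) g.
Proof. induction g as [g IH] using size_ind. apply eqv_mk2;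
  rewrite ?lefts_add, ?rights_add; change (lefts gzero) with (@nil game); change (rights gzero) with (@nil game);
  cbn [map]; rewrite app_nil_r; [rewrite <- (map_id (lefts g)) at 2| rewrite <- (map_id (rights g)) at 2];
  apply R2_map_same; intros a Ha; apply IH; szl; auto. Qed.
Lemma add_0_r g : sim (gadd g gzero) g. Proof. apply eqv_sim, eqv_add_0_r. Qed.
Lemma add_0_l g : sim (gadd gzero g) g.
Proof. rewrite add_comm. apply add_0_r. Qed.
Lemma neg_0 : gneg gzero = gzero. Proof. reflexivity. Qed.
Lemma neg_star : gneg gstar = gstar. Proof. reflexivity. Qed.
Lemma star_star : sim (gadd gstar gstar) gzero.
Proof. split; reflexivity. Qed.
Lemma add_neg_r g : sim (gadd g (gneg g)) gzero.
Proof. unfold sim. rewrite neg_0. eapply eqv_Pp; [|apply mirror]. apply eqv_sym, eqv_add_0_r. Qed.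
Lemma sim_0_Pp g : sim g gzero <-> Pp g.
Proof. unfold sim. rewrite neg_0. split; apply eqv_Pp; [|apply eqv_sym]; apply eqv_add_0_r. Qed.
Lemma U_Rw a : Rw (upn a) = false.
Proof. destruct a; [reflexivity|]. apply Rw_false. simpl. intros x [<-|[]]. reflexivity. Qed.
Lemma U_Lw a : Lw (upn (S a)) = true.
Proof. apply Lw_true. exists (upn a). split; [simpl; auto|apply U_Rw]. Qed.

Lemma F1 : forall a b, b < a -> Lw (gadd (upn a) (gneg (upn b))) = true /\ Rw (gadd (upn a) (gneg (upn b))) = false.
Proof.
  induction a as [|a IHa]; intros b; [lia|]. induction b as [|b IHb]; intros Hb; split.
  - apply Lw_true. exists (gadd (upn a) (gneg (upn 0))). split.
    + rewrite lefts_add. apply in_app_iff; left. simpl; auto.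
    + destruct (Nat.eq_dec a 0) as [->|Ha]; [apply mirror|apply IHa; lia].
  - apply Rw_false. rewrite rights_add. intros x Hx. apply in_app_iff in Hx as [Hx|Hx]; cbn [rights lefts upn map app In] in Hx.
    + destruct Hx as [<-|[]]. reflexivity.
    + destruct Hx.
  - apply Lw_true. exists (gadd (upn a) (gneg (upn (S b)))). split.
    + rewrite lefts_add. apply in_app_iff; left. simpl; auto.
    + destruct (Nat.eq_dec a (S b)) as [->|Ha]; [apply mirror|apply IHa; lia].
  - apply Rw_false. rewrite rights_add. intros x Hx. apply in_app_iff in Hx as [Hx|Hx].
    + cbn [rights lefts upn map app In] in Hx. destruct Hx as [<-|[]]. apply Lw_true. exists (gadd gstar (gneg gstar)). split.
      * rewrite lefts_add. apply in_app_iff; right. simpl; auto.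
      * rewrite neg_star, star_star. reflexivity.
    + rewrite rights_neg in Hx. cbn [rights lefts upn map app In] in Hx. destruct Hx as [<-|[]]. apply IHb. lia.
Qed.

Lemma F1' a b : b < a -> Lw (gadd (upn b) (gneg (upn a))) = false /\ Rw (gadd (upn b) (gneg (upn a))) = true.
Proof.
  intros H. destruct (F1 a b H) as [H1 H2].
  assert (E : sim (gadd (upn b) (gneg (upn a))) (gneg (gadd (upn a) (gneg (upn b))))).
  { rewrite gneg_add, gneg_invol. apply add_comm. }
  rewrite E, Lw_neg, Rw_neg. auto.
Qed.

Lemma lefts_star : lefts gstar = [gzero]. Proof. reflexivity. Qed.
Lemma rights_star : rights gstar = [gzero]. Proof. reflexivity. Qed.
Lemma lefts_zero : lefts gzero = []. Proof. reflexivity. Qed.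
Lemma rights_zero : rights gzero = []. Proof. reflexivity. Qed.
Lemma lefts_upS m : lefts (upn (S m)) = [upn m]. Proof. reflexivity. Qed.
Lemma rights_upS m : rights (upn (S m)) = [gstar]. Proof. reflexivity. Qed.
Lemma lefts_game l r : lefts (Game l r) = l. Proof. reflexivity. Qed.
Lemma rights_game l r : rights (Game l r) = r. Proof. reflexivity. Qed.

Ltac nrm := repeat (rewrite ?lefts_add, ?rights_add, ?lefts_neg, ?rights_neg, ?lefts_star, ?rights_star,
  ?lefts_zero, ?rights_zero, ?lefts_upS, ?rights_upS, ?lefts_game, ?rights_game, ?neg_0);
  cbn [map app In]; rewrite ?in_app_iff.
Ltac nrm_in H := repeat (rewrite ?lefts_add, ?rights_add, ?lefts_neg, ?rights_neg, ?lefts_star, ?rights_star,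
  ?lefts_zero, ?rights_zero, ?lefts_upS, ?rights_upS, ?lefts_game, ?rights_game, ?neg_0 in H);
  cbn [map app In] in H; rewrite ?in_app_iff in H.
Ltac mem := nrm; repeat (first [left; reflexivity | right]).
Ltac cases H := nrm_in H; repeat destruct H as [<-|H]; try (destruct H).

Lemma cancel_star a b : sim (gadd (gadd a gstar) (gadd b gstar)) (gadd a b).
Proof.
  rewrite add_assoc, <- (add_assoc gstar b gstar), (add_comm gstar b), (add_assoc b gstar gstar),
    star_star, add_0_r. reflexivity.
Qed.
Lemma neg_A k : gneg (gadd (upn k) gstar) = gadd (gneg (upn k)) gstar.
Proof. rewrite gneg_add. reflexivity. Qed.

Lemma star0_negA k : sim (gadd (gadd gstar gzero) (gneg (gadd (upn k) gstar))) (gadd gzero (gneg (upn k))).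
Proof. rewrite neg_A, add_0_r, (add_comm (gneg (upn k)) gstar), <- add_assoc, star_star. reflexivity. Qed.

Lemma claimA m : Pp (gadd (gadd (upn (S m)) gstar)
   (gneg (Game [gzero; gadd (upn m) gstar] [gzero; gadd (upn (S (S m))) gstar]))).
Proof.
  split.
  - apply Lw_false; intros x Hx. cases Hx.
    + apply Rw_true. exists (gadd (gadd (upn m) gstar) (gneg (gadd (upn m) gstar))).
      split; [mem|apply mirror].
    + apply Rw_true. eexists (gadd (gadd gstar gzero) _). split; [mem|].
      apply Lw_false; intros z Hz. cases Hz.
      * apply Rw_true. exists (gadd (gadd gzero gzero) gzero). split; [mem|reflexivity].
      * reflexivity.
      * rewrite star0_negA. apply (F1' (S (S m)) 0). lia.
    + apply Rw_true. exists (gadd (gadd gstar gstar) gzero). split; [mem|reflexivity].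
    + rewrite neg_A, cancel_star. apply F1'. lia.
  - apply Rw_false; intros x Hx. cases Hx.
    + apply Lw_true. exists (gadd (gadd gstar gstar) gzero). split; [mem|reflexivity].
    + apply Lw_true. exists (gadd (gadd (upn (S m)) gzero) gzero). split; [mem|].
      rewrite !add_0_r. apply U_Rw.
    + apply Lw_true. exists (gadd (gadd (upn (S m)) gzero) gzero). split; [mem|].
      rewrite !add_0_r. apply U_Rw.
    + rewrite neg_A, cancel_star. apply F1. lia.
Qed.

Lemma claimB m : Pp (gadd (gadd (upn (S m)) gstar)
   (gneg (Game [gzero; gadd (upn m) gstar] [gzero]))).
Proof.
  split.
  - apply Lw_false; intros x Hx. cases Hx.
    + apply Rw_true. exists (gadd (gadd (upn m) gstar) (gneg (gadd (upn m) gstar))).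
      split; [mem|apply mirror].
    + apply Rw_true. eexists (gadd (gadd gstar gzero) _). split; [mem|].
      apply Lw_false; intros z Hz. cases Hz.
      * apply Rw_true. exists (gadd (gadd gzero gzero) gzero). split; [mem|reflexivity].
      * reflexivity.
    + apply Rw_true. exists (gadd (gadd gstar gstar) gzero). split; [mem|reflexivity].
  - apply Rw_false; intros x Hx. cases Hx.
    + apply Lw_true. exists (gadd (gadd gstar gstar) gzero). split; [mem|reflexivity].
    + apply Lw_true. exists (gadd (gadd (upn (S m)) gzero) gzero). split; [mem|].
      rewrite !add_0_r. apply U_Rw.
    + apply Lw_true. exists (gadd (gadd (upn (S m)) gzero) gzero). split; [mem|].
      rewrite !add_0_r. apply U_Rw.
    + rewrite neg_A, cancel_star. apply F1. lia.
Qed.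

Lemma claimE m : let A := gadd (upn (S m)) gstar in
  let K := Game [gzero; A] [gzero; A] in
  Pp (gadd A (gneg (Game [gzero; K] [gzero; K]))).
Proof.
  intros A K. subst A K.
  split.
  - apply Lw_false; intros x Hx. cases Hx.
    + apply Rw_true. exists (gadd (gadd (upn m) gstar) (gneg (Game [gzero; gadd (upn (S m)) gstar] [gzero; gadd (upn (S m)) gstar]))). split; [mem|].
      destruct m as [|m].
      * apply Lw_false; intros z Hz. change (upn 0) with gzero in Hz |- *. cases Hz.
        -- apply Rw_true. exists (gadd (gadd gzero gzero) gzero). split; [mem|reflexivity].
        -- reflexivity.
        -- rewrite neg_A, cancel_star. apply (F1' 1 0). lia.
      * apply Lw_false; intros z Hz. cases Hz.
        -- apply Rw_true.
           exists (gadd (gadd (upn m) gstar) (gneg (gadd (upn (S (S m))) gstar))). split; [mem|].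
           rewrite neg_A, cancel_star. apply F1'. lia.
        -- apply Rw_true. eexists (gadd (gadd gstar gzero) _). split; [mem|].
           apply Lw_false; intros w Hw. cases Hw.
           ++ apply Rw_true. exists (gadd (gadd gzero gzero) gzero). split; [mem|reflexivity].
           ++ reflexivity.
           ++ rewrite star0_negA. apply (F1' (S (S m)) 0). lia.
        -- apply Rw_true. exists (gadd (gadd gstar gstar) gzero). split; [mem|reflexivity].
        -- rewrite neg_A, cancel_star. apply F1'. lia.
    + apply Rw_true. eexists (gadd (gadd gstar gzero) _). split; [mem|].
      apply Lw_false; intros z Hz. cases Hz.
      * apply Rw_true. exists (gadd (gadd gzero gzero) gzero). split; [mem|reflexivity].
      * reflexivity.
      * apply Rw_true. exists (gadd (gadd gstar gzero) (gneg (gadd (upn (S m)) gstar))). split; [mem|].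
        rewrite star0_negA. apply (F1' (S m) 0). lia.
    + apply Rw_true. exists (gadd (gadd gstar gstar) gzero). split; [mem|reflexivity].
    + apply Rw_true. exists (gadd (gadd (upn (S m)) gstar) (gneg (gadd (upn (S m)) gstar))).
      split; [mem|apply mirror].
  - apply Rw_false; intros x Hx. cases Hx.
    + apply Lw_true. exists (gadd (gadd gstar gstar) gzero). split; [mem|reflexivity].
    + apply Lw_true. exists (gadd (gadd (upn (S m)) gzero) gzero). split; [mem|].
      rewrite !add_0_r. apply U_Rw.
    + apply Lw_true. exists (gadd (gadd (upn (S m)) gzero) gzero). split; [mem|].
      rewrite !add_0_r. apply U_Rw.
    + apply Lw_true. exists (gadd (gadd (upn (S m)) gstar) (gneg (gadd (upn (S m)) gstar))).
      split; [mem|apply mirror].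
Qed.

Lemma downn_neg n : downn n = gneg (upn n).
Proof. induction n as [|n IH]; [reflexivity|].
  change (Game [gstar] [downn n] = Game [gneg gstar] [gneg (upn n)]). rewrite IH. reflexivity. Qed.

Theorem theorem2 : forall n : nat, 1 <= n ->
  (* up^[n]* = {0, up^[n-1]* | 0, up^[n+1]*} = {0, up^[n-1]* | 0} *)
  (game_eq (starred (upn n))
       (Game [gzero; starred (upn (n - 1))] [gzero; starred (upn (n + 1))]) /\
   game_eq (Game [gzero; starred (upn (n - 1))] [gzero; starred (upn (n + 1))])
       (Game [gzero; starred (upn (n - 1))] [gzero])) /\
  (* down_[n]* = {0, down_[n+1]* | 0, down_[n-1]*} = {0 | 0, down_[n-1]*} *)
  (game_eq (starred (downn n))
       (Game [gzero; starred (downn (n + 1))] [gzero; starred (downn (n - 1))]) /\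
   game_eq (Game [gzero; starred (downn (n + 1))] [gzero; starred (downn (n - 1))])
       (Game [gzero] [gzero; starred (downn (n - 1))])) /\
  (* up^[n]* = {0, {0, up^[n]* | 0, up^[n]*} | 0, {0, up^[n]* | 0, up^[n]*}} *)
  game_eq (starred (upn n))
      (Game [gzero; Game [gzero; starred (upn n)] [gzero; starred (upn n)]]
            [gzero; Game [gzero; starred (upn n)] [gzero; starred (upn n)]]) /\
  (* down_[n]* = {0, {0, down_[n]* | 0, down_[n]*} | 0, {0, down_[n]* | 0, down_[n]*}} *)
  game_eq (starred (downn n))
      (Game [gzero; Game [gzero; starred (downn n)] [gzero; starred (downn n)]]
            [gzero; Game [gzero; starred (downn n)] [gzero; starred (downn n)]]).
Proof.
  intros n Hn. destruct n as [|m]; [lia|].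
  replace (S m - 1) with m by lia. replace (S m + 1) with (S (S m)) by lia.
  unfold starred. rewrite !downn_neg, <- !neg_A.
  split; [split|split; [split|split]].
  - exact (claimA m).
  - exact (sim_trans _ _ _ (sim_sym _ _ (claimA m)) (claimB m)).
  - exact (sim_neg _ _ (claimA m)).
  - exact (sim_neg _ _ (sim_trans _ _ _ (sim_sym _ _ (claimA m)) (claimB m))).
  - exact (claimE m).
  - exact (sim_neg _ _ (claimE m)).
Qed.
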